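(* Let $\mathcal{N}=(N,M_0)$ be a two-level PT-net system (transitions partitioned into low-level $L$ and high-level $H$) with the property BNDC, and let $M_1$ and $M_2$ be reachable markings of $\mathcal{N}\setminus H$ and $\mathcal{N}$, respectively. If $M_1\,R\,M_2$, then $\mathcal{L}(N\setminus H,M_1)=\mathcal{L}(N\setminus H,M_2)$.
   Context: A PT-net is $N=(P,T,F)$ with $P,T$ finite disjoint and $F:(P\times T)\cup(T\times P)\to\mathbb{N}$; markings $M:P\to\mathbb{N}$; $t$ enabled at $M$ ($M[t\rangle$) iff $M(p)\ge F(p,t)$ for all $p$, firing gives $M'(p)=M(p)+F(t,p)-F(p,t)$ ($M[t\rangle M'$); extended to sequences. $N\setminus H$ deletes the transitions of $H$. $\mathcal{L}(N\setminus H,M)$ is the set of all sequences $s\in L^*$ with $M[s\rangle$ in $N\setminus H$. For systems with disjoint place sets, $\mathcal{N}_1|\mathcal{N}_2$ has the union of places, the union of transitions (shared transitions synchronize, arcs inherited from each component on its own places), and union of initial markings. A high-level net system has only high-level transitions. Transitions in $L$ are observable, those in $H$ unobservable; weak bisimilarity $\approx$ is the existence of a relation between reachable markings containing the initial pair such that, for related $(M,M')$ and symmetrically, an observable step $M[l\rangle$ is matched by unobservable steps, $l$, unobservable steps leading to a related pair, and an unobservable step is matched by unobservable steps leading to a related pair. BNDC: for every high-level net system $\mathcal{N}'$ (places disjoint from those of $\mathcal{N}$) with transition set $H'$ disjoint from $L$, $\mathcal{N}\setminus H\approx(\mathcal{N}|\mathcal{N}')\setminus(H\setminus H')$. The relation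 $R$: $M\,R\,M'$ iff there exist $w\in L^*$ and $w'\in(L\cup H)^*$ with $M_0[w\rangle M$, $M_0[w'\rangle M'$, and $w$ the projection of $w'$ onto $L^*$. *)

(* Defs.v *)
From mathcomp Require Import all_boot.
Set Implicit Arguments. Unset Strict Implicit. Unset Printing Implicit Defensive.

(* Transition names are drawn from the (infinite) universe [nat], so that
   transitions of different nets can be shared (synchronised) by name.
   Places of a net form an arbitrary finite type; places of different nets
   are disjoint by construction (composition uses the sum type). *)

Record ptnet := PTNet {
  place : finType;
  trans : seq nat;
  pre   : place -> nat -> nat;
  post  : nat -> place -> nat
}.

Definition marking (N : ptnet) := place N -> nat.

Definition enabled (N : ptnet) (M : marking N) (t : nat) : Prop :=
  t \in trans N /\ forall p, @pre N p t <= M p.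

Definition step (N : ptnet) (M : marking N) (t : nat) (M' : marking N) : Prop :=
  enabled M t /\ M' = (fun p => M p + @post N t p - @pre N p t).

Fixpoint fires (N : ptnet) (M : marking N) (s : seq nat) (M' : marking N)
  : Prop :=
  match s with
  | [::] => M' = M
  | t :: s' => exists M1, step M t M1 /\ fires M1 s' M'
  end.

Definition reachable (N : ptnet) (M0 M : marking N) : Prop :=
  exists s, fires M0 s M.

Definition delete (N : ptnet) (H : seq nat) : ptnet :=
  @PTNet (place N) [seq t <- trans N | t \notin H] (@pre N) (@post N).

Definition lang (N : ptnet) (L H : seq nat) (M : marking N) (s : seq nat)
  : Prop :=
  all (fun t => t \in L) s /\ exists M', @fires (delete N H) M s M'.

(* Parallel composition N1 | N2 : union of places (disjoint sum), union of
   transitions (shared names synchronise), arcs inherited from each component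
   on its own places. *)
Definition compose (N1 N2 : ptnet) : ptnet :=
  @PTNet (place N1 + place N2)%type
    (undup (trans N1 ++ trans N2))
    (fun p t => match p with
                | inl p1 => if t \in trans N1 then @pre N1 p1 t else 0
                | inr p2 => if t \in trans N2 then @pre N2 p2 t else 0
                end)
    (fun t p => match p with
                | inl p1 => if t \in trans N1 then @post N1 t p1 else 0
                | inr p2 => if t \in trans N2 then @post N2 t p2 else 0
                end).

Definition union_marking (N1 N2 : ptnet) (M1 : marking N1) (M2 : marking N2)
  : marking (compose N1 N2) :=
  fun p => match p with inl p1 => M1 p1 | inr p2 => M2 p2 end.

Definition seqdiff (A B : seq nat) : seq nat := [seq t <- A | t \notin B].

Definition tau_star (L : seq nat) (N : ptnet) (M M' : marking N) : Prop :=
  exists s, all (fun t => t \notin L) s /\ fires M s M'.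

Definition wb_transfer (L : seq nat) (N1 N2 : ptnet)
  (R : marking N1 -> marking N2 -> Prop) : Prop :=
  forall M M', R M M' ->
    (forall l M1, l \in L -> step M l M1 ->
       exists Ma Mb Mc, tau_star L M' Ma /\ step Ma l Mb /\
                        tau_star L Mb Mc /\ R M1 Mc) /\
    (forall h M1, h \notin L -> step M h M1 ->
       exists Mc, tau_star L M' Mc /\ R M1 Mc).

Definition weak_bisim (L : seq nat) (N1 N2 : ptnet)
  (M01 : marking N1) (M02 : marking N2) : Prop :=
  exists R : marking N1 -> marking N2 -> Prop,
    (forall M M', R M M' -> reachable M01 M /\ reachable M02 M') /\
    R M01 M02 /\
    wb_transfer L R /\
    wb_transfer L (fun M' M => R M M').

Definition two_level (N : ptnet) (L H : seq nat) : Prop :=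
  (forall t, (t \in trans N) = (t \in L) || (t \in H)) /\
  (forall t, t \in L -> t \notin H).

Definition BNDC (N : ptnet) (L H : seq nat) (M0 : marking N) : Prop :=
  forall (N' : ptnet) (M0' : marking N'),
    (forall t, t \in trans N' -> t \notin L) ->
    @weak_bisim L (delete N H) (delete (compose N N') (seqdiff H (trans N')))
      M0 (union_marking M0 M0').

Definition relR (N : ptnet) (L : seq nat) (M0 M M' : marking N) : Prop :=
  exists w w' : seq nat,
    all (fun t => t \in L) w /\ fires M0 w M /\ fires M0 w' M' /\
    w = [seq t <- w' | t \in L].

(* Main.v *)
Require Import Defs.
From mathcomp Require Import all_boot.
From Stdlib Require Import FunctionalExtensionality.
From mathcomp Require Import zify.

Set Implicit Arguments. Unset Strict Implicit. Unset Printing Implicit Defensive.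

Lemma fires_det (N : ptnet) (M : marking N) s M1 M2 :
  fires M s M1 -> fires M s M2 -> M1 = M2.
Proof.
elim: s M => [|t s IH] M /=; first by move=> -> ->.
move=> [A [[_ EA] HA]] [B [[_ EB] HB]]; subst A B; exact: IH HA HB.
Qed.

Lemma fires_del (N : ptnet) H (M : marking N) s M' :
  @fires (delete N H) M s M' -> fires M s M'.
Proof.
elim: s M => [|t s IH] M /=; first by [].
move=> [A [[[Ht Hp] EA] HA]]; exists A; split; last exact: IH.
split; last exact EA. split; last exact Hp.
by move: Ht; rewrite /= mem_filter => /andP[].
Qed.

Lemma tauN (N : ptnet) L H (X Y : marking N) :
  two_level N L H -> @tau_star L (delete N H) X Y -> Y = X.
Proof.
move=> [HT _] [[|t s] [Hall Hf]]; first exact Hf.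
move: Hf Hall => /= [A [[[Ht _] _] _]] /andP[HtL _].
move: Ht; rewrite mem_filter HT => /andP[HnH].
by rewrite (negbTE HtL) (negbTE HnH).
Qed.

Definition budget (H : seq nat) : ptnet :=
  @PTNet unit H (fun _ _ => 1) (fun _ _ => 0).

Definition um (N : ptnet) H (M : marking N) (k : nat) : marking (compose N (budget H)) :=
  union_marking (N2 := budget H) M (fun _ => k).

Arguments um {N} H M k.

Section S.
Variables (N : ptnet) (L H : seq nat).
Hypothesis HTL : two_level N L H.

Definition C := delete (compose N (budget H)) (seqdiff H (trans (budget H))).
Definition D := delete N H.

Lemma inH t : t \in trans N -> (t \in H) = (t \notin L).
Proof.
case: HTL => HT HD; rewrite HT => /orP[tL|tH].
  by rewrite tL (negbTE (HD _ tL)).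
rewrite tH; case tL: (t \in L) => //; by move: (HD _ tL); rewrite tH.
Qed.

Lemma memC t : (t \in trans C) = (t \in trans N).
Proof.
rewrite /= mem_filter mem_undup mem_cat /seqdiff mem_filter.
case: HTL => HT _. rewrite HT. by case: (t \in H); case: (t \in L).
Qed.

Lemma stepC t (M M' : marking N) k :
  step M t M' -> (t \notin L -> 0 < k) ->
  @step C (um H M k) t (um H M' (k - (t \notin L))).
Proof.
move=> [[Ht Hp] EM] Hk; split; first split.
- by rewrite memC.
- case=> [p|[]] /=; first by rewrite Ht.
  rewrite (inH Ht); case: (t \notin L) Hk => //= ->; by [].
- apply: functional_extensionality; case=> [p|[]] /=; first by rewrite Ht EM.
  rewrite (inH Ht); by case: (t \notin L); rewrite ?addn0.
Qed.

Lemma firesA (M M' : marking N) w k :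
  fires M w M' -> count (fun t => t \notin L) w <= k ->
  @fires C (um H M k) w (um H M' (k - count (fun t => t \notin L) w)).
Proof.
elim: w M k => [|t w IH] M k /=; first by move=> ->; rewrite subn0.
move=> [A [SA FA]] Hc; exists (um H A (k - (t \notin L))); split.
  apply: stepC SA _; move: Hc; case: (t \notin L) => //=; lia.
rewrite subnDA; apply: IH FA _; move: Hc; case: (t \notin L) => /=; lia.
Qed.

Lemma tauC (M : marking N) Y : @tau_star L C (um H M 0) Y -> Y = um H M 0.
Proof.
move=> [[|t s] [Hall Hf]]; first exact Hf.
move: Hf Hall => /= [A [[[Ht Hp] _] _]] /andP[HtL _].
move: (Hp (inr tt)); rewrite /= -/C.
move: Ht; rewrite memC => Ht. by rewrite (inH Ht) HtL.
Qed.

Lemma stepD_N (M M' : marking N) t : @step D M t M' -> step M t M'.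
Proof.
move=> [[Ht Hp] E]; split; last exact E; split; last exact Hp.
by move: Ht; rewrite /= mem_filter => /andP[].
Qed.

Lemma stepC0 l (M M' : marking N) : l \in L -> @step D M l M' ->
  @step C (um H M 0) l (um H M' 0).
Proof.
move=> lL S. have := stepC (stepD_N S). rewrite lL; by apply.
Qed.

Lemma stepC0inv l (M : marking N) Y : l \in L -> @step C (um H M 0) l Y ->
  exists M', @step D M l M' /\ Y = um H M' 0.
Proof.
move=> lL [[Ht Hp] E].
move: Ht; rewrite memC => Ht.
have lH : l \notin H by rewrite (inH Ht) lL.
exists (fun p => M p + post l p - pre p l); split.
  split; last by []. split; first by rewrite /= mem_filter lH.
  move=> p; move: (Hp (inl p)); by rewrite /= Ht.
rewrite E; apply: functional_extensionality; case=> [p|[]] /=; first by rewrite Ht.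
by rewrite (negbTE lH).
Qed.

End S.

Lemma transB (N1 N2 : ptnet) L (R : marking N1 -> marking N2 -> Prop)
  (tau1 : forall X Y, @tau_star L N1 X Y -> Y = X)
  (HT : wb_transfer L (fun a b => R b a)) s : forall X Y Y',
  R X Y -> fires Y s Y' -> exists X', fires X [seq t <- s | t \in L] X' /\ R X' Y'.
Proof.
elim: s => [|t s IH] X Y Y' HR /=; first by move=> ->; exists X.
move=> [Y1 [S1 F1]]; case: (boolP (t \in L)) => tL.
- have [Ma [Mb [Mc [T1 [S2 [T2 R2]]]]]] := (HT Y X HR).1 t Y1 tL S1.
  have E1 := tau1 _ _ T1; have E2 := tau1 _ _ T2; subst Ma Mc.
  have [X' [FX RX]] := IH Mb Y1 Y' R2 F1.
  by exists X'; split => //; exists Mb.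
- have [Mc [T1 R2]] := (HT Y X HR).2 t Y1 tL S1.
  have E1 := tau1 _ _ T1; subst Mc.
  exact: IH R2 F1.
Qed.

Lemma langC (N : ptnet) L H (HTL : two_level N L H)
  (R : marking (D N H) -> marking (C N H) -> Prop)
  (HF : wb_transfer L R) (HT : wb_transfer L (fun a b => R b a)) s :
  all (fun t => t \in L) s -> forall X M, R X (um H M 0) ->
  ((exists X', @fires (D N H) X s X') <-> (exists M', @fires (D N H) M s M')).
Proof.
elim: s => [|l s IH] /=; first by move=> _ X M _; split=> _; [exists M | exists X].
move=> /andP[lL As] X M HR; split.
- move=> [X' [X1 [S1 F1]]].
  have [Ma [Mb [Mc [T1 [S2 [T2 R2]]]]]] := (HF X (um H M 0) HR).1 l X1 lL S1.
  move: (tauC HTL T1) => E1; subst Ma.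
  have [M' [SM EM]] := stepC0inv HTL lL S2; subst Mb.
  move: (tauC HTL T2) => E2; subst Mc.
  have [M'' FM] := (IH As X1 M' R2).1 (ex_intro _ X' F1).
  by exists M''; exists M'.
- move=> [M'' [M' [S1 F1]]].
  have S2 := stepC0 HTL lL S1.
  have [Ma [Mb [Mc [T1 [S3 [T2 R2]]]]]] := (HT (um H M 0) X HR).1 l (um H M' 0) lL S2.
  move: (tauN HTL T1) (tauN HTL T2) => E1 E2; subst Ma Mc.
  have [X'' FX] := (IH As Mb M' R2).2 (ex_intro _ M'' F1).
  by exists X''; exists Mb.
Qed.

Theorem lemma2 (N : ptnet) (L H : seq nat) (M0 M1 M2 : marking N) :
  two_level N L H ->
  BNDC L H M0 ->
  @reachable (delete N H) M0 M1 ->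
  reachable M0 M2 ->
  relR L M0 M1 M2 ->
  forall s, lang L H M1 s <-> lang L H M2 s.
Proof.
move=> HTL HB _ _ [w [w' [Hw [F1 [F2 Ew]]]]] s.
pose k := count (fun t => t \notin L) w'.
have HN' : forall t, t \in trans (budget H) -> t \notin L.
  move=> t tH; apply/negP => tL; case: HTL => _ HD; by move: (HD _ tL); rewrite tH.
have [R [_ [R0 [HF HT]]]] := HB (budget H) (fun _ => k) HN'.
have FA := firesA HTL F2 (leqnn k); rewrite subnn in FA.
have [X' [FX RX]] := transB (fun X Y => tauN HTL) HT R0 FA.
rewrite -Ew in FX.
have EX : X' = M1 := fires_det (fires_del FX) F1.
subst X'.
rewrite /lang; split=> [[Hs Hf]|[Hs Hf]]; split=> //.
- exact: (langC HTL HF HT Hs RX).1.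
- exact: (langC HTL HF HT Hs RX).2.
Qed.
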